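(* Consider the faulty-starter delivery problem described in the context, with finisher starting position $P=(x,y)$, $y\ge 0$. There exists an online algorithm with optimal (i.e. minimum possible) competitive ratio in which the finisher moves from its initial position $P$ along a straight line directly to some point $M=(m,0)$ of the segment $\overline{ST}$, and from then on it remains within the segment $\overline{ST}$.
   Context: Setting. In the plane let $S=(0,0)$ and $T=(1,0)$. A ''starter'' drone carrying a package starts at $S$ at time $0$ and moves at unit speed along the segment $\overline{ST}$ towards $T$. At an unknown time $t\in[0,1]$ it fails and stays forever at $(t,0)$ with the package (so at time $s$ the package is at $(\min\{s,t\},0)$). A ''finisher'' drone starts at time $0$ at $P=(x,y)$ with $y\ge 0$; it moves at speed (at most) $1$ and can start, stop and change direction instantaneously. The package can be handed over only when the two drones are co-located; the package is delivered at the first time the finisher, carrying the package, is at $T$. An online algorithm $\mathcal{A}$ specifies the finisher's trajectory using only $(x,y)$ (not $t$); $A(t)$ denotes its delivery time when the fail time is $t$. The optimal offline delivery time (fail time known in advance) is $\mathrm{Opt}(t)=\max\{1,\sqrt{(x-t)^2+y^2}+1-t\}$. The competitive ratio for fail time $t$ is $\mathrm{CR}_{\mathcal{A}}(t)=A(t)/\mathrm{Opt}(t)$, and the competitive ratio of $\mathcal{A}$ is $\mathrm{CR}_{\mathcal{A}}=\sup_{0\le t\le 1}\mathrm{CR}_{\mathcal{A}}(t)$. *)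

(* Defs.v *)
From Stdlib Require Import Reals Lra.
Open Scope R_scope.

Definition pt := (R * R)%type.

Definition dist (p q : pt) : R :=
  sqrt ((fst p - fst q) ^ 2 + (snd p - snd q) ^ 2).

Definition Tpt : pt := (1, 0).

(* Position of the package at time s when the starter fails at time t. *)
Definition pkg (t s : R) : pt := (Rmin s t, 0).

(* An online algorithm for start position P is the finisher's trajectory
   before it obtains the package: a map from time to the plane, starting at P,
   moving at speed at most 1.  It depends only on P (not on t).  Once the
   finisher first meets the package it takes it and moves straight to T
   (any other post-pickup behaviour only delays delivery). *)
Definition online_alg (P : pt) (g : R -> pt) : Prop :=
  g 0 = P /\
  forall s1 s2, 0 <= s1 -> 0 <= s2 -> dist (g s1) (g s2) <= Rabs (s1 - s2).

Definition first_meet (g : R -> pt) (t tau : R) : Prop :=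
  0 <= tau /\ g tau = pkg t tau /\
  forall s, 0 <= s < tau -> g s <> pkg t s.

(* Delivery time A(t) = d : pick up at the first meeting time, then go
   straight to T (distance 1 - min(tau,t)). *)
Definition delivery_time (g : R -> pt) (t d : R) : Prop :=
  exists tau, first_meet g t tau /\ d = tau + (1 - Rmin tau t).

Definition Opt (P : pt) (t : R) : R :=
  Rmax 1 (dist P (t, 0) + 1 - t).

Definition CR_le (P : pt) (g : R -> pt) (c : R) : Prop :=
  forall t, 0 <= t <= 1 ->
    exists d, delivery_time g t d /\ d <= c * Opt P t.

Definition straight_then_segment (P : pt) (g : R -> pt) : Prop :=
  exists m, 0 <= m <= 1 /\
    let M : pt := (m, 0) in
    let d := dist P M in
    (forall s, 0 <= s <= d ->
        g s = (fst P + (s / d) * (m - fst P), snd P + (s / d) * (0 - snd P))) /\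
    (forall s, d <= s -> 0 <= fst (g s) <= 1 /\ snd (g s) = 0).

(* Main.v *)
Require Import Defs.
From Stdlib Require Import Reals Lra Psatz Classical ClassicalEpsilon.
Require Import Defs.
Open Scope R_scope.

Lemma small_zero z : (forall e, 0 < e -> Rabs z < e) -> z = 0.
Proof.
  intros H. destruct (Req_dec z 0) as [|Hn]; auto.
  assert (Hp : 0 < Rabs z) by (apply Rabs_pos_lt; auto).
  specialize (H _ Hp). lra.
Qed.

Lemma le_small a b : (forall e, 0 < e -> a <= b + e) -> a <= b.
Proof.
  intros H. destruct (Rle_dec a b) as [|Hn]; auto.
  specialize (H ((a - b)/2)). lra.
Qed.

Lemma dist_sym p q : dist p q = dist q p.
Proof. unfold dist. f_equal. ring. Qed.

Lemma dist_ge_fst p q : Rabs (fst p - fst q) <= dist p q.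
Proof.
  unfold dist. rewrite <- (sqrt_pow2 (Rabs _)) by apply Rabs_pos.
  apply sqrt_le_1_alt. rewrite pow2_abs.
  assert (0 <= (snd p - snd q) ^ 2) by (apply pow2_ge_0). lra.
Qed.

Lemma dist_ge_snd p q : Rabs (snd p - snd q) <= dist p q.
Proof.
  unfold dist. rewrite <- (sqrt_pow2 (Rabs _)) by apply Rabs_pos.
  apply sqrt_le_1_alt. rewrite pow2_abs.
  assert (0 <= (fst p - fst q) ^ 2) by (apply pow2_ge_0). lra.
Qed.

Lemma dist_ge0 p q : 0 <= dist p q.
Proof. unfold dist. apply sqrt_pos. Qed.

Lemma dist_le_abs p q : dist p q <= Rabs (fst p - fst q) + Rabs (snd p - snd q).
Proof.
  unfold dist. set (a := fst p - fst q). set (b := snd p - snd q).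
  rewrite <- (sqrt_pow2 (Rabs a + Rabs b)) by (pose proof (Rabs_pos a); pose proof (Rabs_pos b); lra).
  apply sqrt_le_1_alt.
  pose proof (Rabs_pos a); pose proof (Rabs_pos b).
  rewrite <- (pow2_abs a).
  rewrite <- (pow2_abs b).
  nra.
Qed.

Lemma dist_axis a b : dist (a, 0) (b, 0) = Rabs (a - b).
Proof.
  unfold dist. cbn [fst snd]. replace ((a - b) ^ 2 + (0 - 0) ^ 2) with ((a - b) ^ 2) by ring.
  rewrite <- (pow2_abs (a - b)). apply sqrt_pow2. apply Rabs_pos.
Qed.

Lemma dist_tri p q r : dist p r <= dist p q + dist q r.
Proof.
  unfold dist.
  set (u1 := fst p - fst q). set (u2 := snd p - snd q).
  set (v1 := fst q - fst r). set (v2 := snd q - snd r).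
  replace (fst p - fst r) with (u1 + v1) by (unfold u1, v1; ring).
  replace (snd p - snd r) with (u2 + v2) by (unfold u2, v2; ring).
  set (Su := u1 ^ 2 + u2 ^ 2). set (Sv := v1 ^ 2 + v2 ^ 2).
  assert (HSu : 0 <= Su) by (unfold Su; nra).
  assert (HSv : 0 <= Sv) by (unfold Sv; nra).
  pose proof (sqrt_pos Su). pose proof (sqrt_pos Sv).
  rewrite <- (sqrt_pow2 (sqrt Su + sqrt Sv)) by lra.
  apply sqrt_le_1_alt.
  assert (Hc : u1 * v1 + u2 * v2 <= sqrt Su * sqrt Sv).
  { rewrite <- sqrt_mult by auto.
    destruct (Rle_dec (u1 * v1 + u2 * v2) 0). { pose proof (sqrt_pos (Su * Sv)); lra. }
    rewrite <- (sqrt_pow2 (u1 * v1 + u2 * v2)) by lra.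
    apply sqrt_le_1_alt. unfold Su, Sv. pose proof (pow2_ge_0 (u1*v2-u2*v1)). nra. }
  replace ((sqrt Su + sqrt Sv) ^ 2) with (sqrt Su * sqrt Su + sqrt Sv * sqrt Sv + 2 * (sqrt Su * sqrt Sv)) by ring.
  rewrite !sqrt_sqrt by auto. unfold Su, Sv in *. nra.
Qed.

Lemma Rabs_zero z : Rabs z = 0 -> z = 0.
Proof. unfold Rabs; destruct Rcase_abs; lra. Qed.
From mathcomp Require ssreflect ssrbool ssrnat.
From mathcomp Require boolp classical_sets filter.
Module UF.
Import ssreflect ssrbool ssrnat classical_sets filter.
Local Open Scope classical_set_scope.
Lemma ultra_exists : exists U : (nat -> Prop) -> Prop,
  (forall A B, U A -> U B -> U (fun n => A n /\ B n)) /\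
  (forall A B : nat -> Prop, (forall n, A n -> B n) -> U A -> U B) /\
  ~ U (fun _ => False) /\
  (forall A, U A \/ U (fun n => ~ A n)) /\
  (forall N, U (fun n => (N <= n)%coq_nat)).
Proof.
have [G [GU sFG]] := ultraFilterLemma (@eventually_filter).
exists G; split; [|split; [|split; [|split]]].
- move=> A B GA GB. apply: (filterS _ (filterI GA GB)). by move=> n [].
- move=> A B AB GA. apply: filterS GA. exact: AB.
- move=> G0. have := @filter_ex _ G (@ultra_proper _ _ GU) (fun _ => False) G0. by case.
- move=> A. exact: in_ultra_setVsetC.
- move=> N. apply: sFG. exists N => // n /= /leP. done.
Qed.
End UF.


Lemma first_time (Q : R -> Prop) (sg : R) : 0 <= sg -> Q sg ->
  (forall tau, 0 <= tau -> ~ Q tau -> exists e, 0 < e /\ forall s, tau <= s < tau + e -> ~ Q s) ->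
  exists tau, 0 <= tau <= sg /\ Q tau /\ forall s, 0 <= s < tau -> ~ Q s.
Proof.
  intros Hsg HQ Hcl.
  set (E := fun r => exists s, 0 <= s /\ Q s /\ r = - s).
  assert (Hb : bound E). { exists 0. intros r [s [Hs [_ ->]]]. lra. }
  assert (He : exists r, E r). { exists (- sg). exists sg. auto. }
  destruct (completeness E Hb He) as [m [Hub Hlub]].
  assert (Hm0 : m <= 0). { apply Hlub. intros r [s [Hs [_ ->]]]. lra. }
  assert (Hsgm : - sg <= m). { apply Hub. exists sg. auto. }
  assert (Hlow : forall s, 0 <= s -> Q s -> - m <= s).
  { intros s Hs Qs. assert (- s <= m) by (apply Hub; exists s; auto). lra. }
  exists (- m). split; [lra|]. split.
  - apply NNPP. intros HnQ. destruct (Hcl (- m) ltac:(lra) HnQ) as [e [He0 Hne]].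
    assert (Hex : exists s, 0 <= s /\ Q s /\ s < - m + e).
    { apply NNPP. intros Hno.
      assert (m <= - (- m + e)).
      { apply Hlub. intros r [s [Hs [Qs ->]]].
        destruct (Rlt_dec s (- m + e)) as [Hl|Hl].
        - exfalso. apply Hno. exists s. auto.
        - lra. }
      lra. }
    destruct Hex as [s [Hs [Qs Hlt]]].
    apply (Hne s); auto.
  - intros s Hs Qs. pose proof (Hlow s (proj1 Hs) Qs). lra.
Qed.

Definition lip_from (G : R -> pt) (a : R) :=
  forall s1 s2, a <= s1 -> a <= s2 -> dist (G s1) (G s2) <= Rabs (s1 - s2).

Lemma Rmin_lip a b t : Rabs (Rmin a t - Rmin b t) <= Rabs (a - b).
Proof.
  unfold Rmin. destruct (Rle_dec a t); destruct (Rle_dec b t);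
  unfold Rabs; repeat destruct Rcase_abs; lra.
Qed.

Lemma meet_closed (G : R -> pt) (t : R) : lip_from G 0 ->
  forall tau, 0 <= tau -> ~ (G tau = pkg t tau) ->
  exists e, 0 < e /\ forall s, tau <= s < tau + e -> ~ (G s = pkg t s).
Proof.
  intros HG tau Htau Hne.
  set (delta := Rabs (fst (G tau) - Rmin tau t) + Rabs (snd (G tau))).
  assert (Hd : 0 < delta).
  { unfold delta. pose proof (Rabs_pos (fst (G tau) - Rmin tau t)).
    pose proof (Rabs_pos (snd (G tau))).
    destruct (Req_dec (Rabs (fst (G tau) - Rmin tau t) + Rabs (snd (G tau))) 0) as [Hz|Hz]; [|lra].
    exfalso. apply Hne. unfold pkg.
    assert (H1 : Rabs (fst (G tau) - Rmin tau t) = 0) by lra.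
    assert (H2 : Rabs (snd (G tau)) = 0) by lra.
    apply Rabs_zero in H1. apply Rabs_zero in H2.
    destruct (G tau) as [a b]. simpl in *. f_equal; lra. }
  exists (delta / 3). split; [lra|]. intros s [Hs1 Hs2] Heq.
  pose proof (HG s tau ltac:(lra) Htau) as Hl.
  pose proof (dist_ge_fst (G s) (G tau)). pose proof (dist_ge_snd (G s) (G tau)).
  rewrite Heq in *. unfold pkg in *. simpl in *.
  pose proof (Rmin_lip s tau t).
  rewrite Rabs_right in Hl by lra.
  unfold delta in Hd, Hs2.
  assert (Rabs (fst (G tau) - Rmin tau t) <= Rabs (Rmin s t - fst (G tau)) + Rabs (Rmin s t - Rmin tau t)).
  { unfold Rabs; repeat destruct Rcase_abs; lra. }
  assert (Rabs (snd (G tau)) = Rabs (0 - snd (G tau))).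
  { rewrite <- Rabs_Ropp. f_equal. ring. }
  assert (Rabs (s - tau) = s - tau) by (apply Rabs_right; lra).
  lra.
Qed.

Definition onseg (p : pt) := 0 <= fst p <= 1 /\ snd p = 0.

Lemma seg_closed (G : R -> pt) : lip_from G 0 ->
  forall tau, 0 <= tau -> ~ onseg (G tau) ->
  exists e, 0 < e /\ forall s, tau <= s < tau + e -> ~ onseg (G s).
Proof.
  intros HG tau Htau Hne. unfold onseg in *.
  assert (Hk : forall s, tau <= s -> Rabs (fst (G s) - fst (G tau)) <= s - tau /\
                                     Rabs (snd (G s) - snd (G tau)) <= s - tau).
  { intros s Hs. pose proof (HG s tau ltac:(lra) Htau) as Hl.
    rewrite Rabs_right in Hl by lra.
    pose proof (dist_ge_fst (G s) (G tau)). pose proof (dist_ge_snd (G s) (G tau)). lra. }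
  destruct (Rlt_dec (fst (G tau)) 0) as [Hlt|Hge].
  { exists (- fst (G tau)). split; [lra|]. intros s [Hs1 Hs2] [[Ha Hb] Hc].
    destruct (Hk s Hs1) as [K1 K2]. revert K1; unfold Rabs; destruct Rcase_abs; lra. }
  destruct (Rlt_dec 1 (fst (G tau))) as [Hlt1|Hge1].
  { exists (fst (G tau) - 1). split; [lra|]. intros s [Hs1 Hs2] [[Ha Hb] Hc].
    destruct (Hk s Hs1) as [K1 K2]. revert K1; unfold Rabs; destruct Rcase_abs; lra. }
  assert (Hsn : snd (G tau) <> 0) by (intro; apply Hne; split; [lra|auto]).
  exists (Rabs (snd (G tau))). split; [apply Rabs_pos_lt; auto|].
  intros s [Hs1 Hs2] [[Ha Hb] Hc].
  destruct (Hk s Hs1) as [K1 K2]. rewrite Hc in K2. revert K2 Hs2.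
  unfold Rabs; repeat destruct Rcase_abs; lra.
Qed.

Definition dM (x y m : R) := dist (x, y) (m, 0).
Definition line (x y m s : R) : pt :=
  (fst (x, y) + (s / dM x y m) * (m - fst (x, y)), snd (x, y) + (s / dM x y m) * (0 - snd (x, y))).
Definition proj (p : pt) : pt := (Rmax 0 (Rmin (fst p) 1), 0).
Definition gen (x y m : R) (H : R -> pt) (tau0 s : R) : pt :=
  if Rle_dec s (dM x y m) then line x y m s else proj (H (Rmax s tau0)).

Lemma dM_sq x y m : dM x y m * dM x y m = (x - m) ^ 2 + (y - 0) ^ 2.
Proof. unfold dM, dist. cbn [fst snd]. apply sqrt_sqrt. pose proof (pow2_ge_0 (x - m)); pose proof (pow2_ge_0 (y - 0)); lra. Qed.

Lemma dM_zero x y m : dM x y m = 0 -> x = m /\ y = 0.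
Proof.
  intros H. pose proof (dM_sq x y m) as E. rewrite H in E.
  pose proof (pow2_ge_0 (x - m)); pose proof (pow2_ge_0 (y - 0)).
  assert (A : (x - m) ^ 2 = 0) by lra. assert (B : (y - 0) ^ 2 = 0) by lra.
  destruct (Req_dec (x - m) 0) as [A1|A1]; [|exfalso; exact (pow_nonzero _ 2 A1 A)].
  destruct (Req_dec (y - 0) 0) as [B1|B1]; [|exfalso; exact (pow_nonzero _ 2 B1 B)]. lra.
Qed.

Lemma line_lip x y m s1 s2 : dist (line x y m s1) (line x y m s2) <= Rabs (s1 - s2).
Proof.
  pose proof (dist_ge0 (x, y) (m, 0)) as Hd. fold (dM x y m) in Hd.
  destruct (Req_dec (dM x y m) 0) as [H0|H0].
  - destruct (dM_zero _ _ _ H0) as [-> ->]. unfold line, dist. cbn [fst snd].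
    replace ((m + s1 / dM m 0 m * (m - m) - (m + s2 / dM m 0 m * (m - m))) ^ 2 +
      (0 + s1 / dM m 0 m * (0 - 0) - (0 + s2 / dM m 0 m * (0 - 0))) ^ 2) with 0 by ring.
    rewrite sqrt_0. apply Rabs_pos.
  - right. unfold line, dist. cbn [fst snd].
    replace ((x + s1 / dM x y m * (m - x) - (x + s2 / dM x y m * (m - x))) ^ 2 +
      (y + s1 / dM x y m * (0 - y) - (y + s2 / dM x y m * (0 - y))) ^ 2)
    with (((s1 - s2) / dM x y m) ^ 2 * ((x - m) ^ 2 + (y - 0) ^ 2)) by (field; auto).
    rewrite <- dM_sq.
    replace (((s1 - s2) / dM x y m) ^ 2 * (dM x y m * dM x y m)) with ((s1 - s2) ^ 2) by (field; auto).
    rewrite <- pow2_abs. apply sqrt_pow2. apply Rabs_pos.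
Qed.

Lemma line_end x y m : line x y m (dM x y m) = (m, 0).
Proof.
  destruct (Req_dec (dM x y m) 0) as [H0|H0].
  - pose proof (dM_zero _ _ _ H0) as [Hx Hy]. unfold line. cbn [fst snd]. rewrite H0.
    subst. f_equal; unfold Rdiv; ring.
  - unfold line. cbn [fst snd]. f_equal; field; auto.
Qed.

Lemma line_0 x y m : line x y m 0 = (x, y).
Proof. unfold line. cbn [fst snd]. f_equal; unfold Rdiv; ring. Qed.

Lemma clamp_lip a b : Rabs (Rmax 0 (Rmin a 1) - Rmax 0 (Rmin b 1)) <= Rabs (a - b).
Proof.
  unfold Rmax, Rmin. repeat destruct Rle_dec; unfold Rabs; repeat destruct Rcase_abs; lra.
Qed.

Lemma proj_lip p q : dist (proj p) (proj q) <= dist p q.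
Proof.
  unfold proj. rewrite dist_axis. eapply Rle_trans; [apply clamp_lip|]. apply dist_ge_fst.
Qed.

Lemma proj_seg p : onseg p -> proj p = p.
Proof.
  destruct p as [a b]. unfold onseg, proj. cbn [fst snd]. intros [[H1 H2] ->].
  f_equal. unfold Rmax, Rmin. repeat destruct Rle_dec; lra.
Qed.

Lemma Rmax_lip a b c : Rabs (Rmax a c - Rmax b c) <= Rabs (a - b).
Proof. unfold Rmax. repeat destruct Rle_dec; unfold Rabs; repeat destruct Rcase_abs; lra. Qed.

Section Gen.
Variables (x y m tau0 : R) (H : R -> pt).
Hypotheses (Hm : 0 <= m <= 1) (Hd : dM x y m <= tau0) (HH : H tau0 = (m, 0))
  (Hlip : lip_from H tau0).

Lemma tail_lip s1 s2 : dist (proj (H (Rmax s1 tau0))) (proj (H (Rmax s2 tau0))) <= Rabs (s1 - s2).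
Proof.
  eapply Rle_trans; [apply proj_lip|]. eapply Rle_trans; [apply Hlip|].
  - apply Rmax_r.
  - apply Rmax_r.
  - apply Rmax_lip.
Qed.

Lemma tail_d : proj (H (Rmax (dM x y m) tau0)) = (m, 0).
Proof.
  rewrite Rmax_right by lra. rewrite HH. apply proj_seg. unfold onseg; simpl; lra.
Qed.

Lemma gen_lip s1 s2 : dist (gen x y m H tau0 s1) (gen x y m H tau0 s2) <= Rabs (s1 - s2).
Proof.
  assert (Hmix : forall a b, a <= dM x y m -> ~ b <= dM x y m ->
     dist (line x y m a) (proj (H (Rmax b tau0))) <= Rabs (a - b)).
  { intros a b Ha Hb.
    eapply Rle_trans; [apply (dist_tri _ (m, 0))|].
    pose proof (line_lip x y m a (dM x y m)) as L1. rewrite line_end in L1.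
    pose proof (tail_lip (dM x y m) b) as L2. rewrite tail_d in L2.
    revert L1 L2 Hb. unfold Rabs; repeat destruct Rcase_abs; lra. }
  unfold gen. destruct (Rle_dec s1 (dM x y m)); destruct (Rle_dec s2 (dM x y m)).
  - apply line_lip.
  - apply Hmix; auto.
  - rewrite dist_sym, Rabs_minus_sym. apply Hmix; auto.
  - apply tail_lip.
Qed.

Lemma gen_online : online_alg (x, y) (gen x y m H tau0).
Proof.
  split.
  - unfold gen. destruct Rle_dec as [|n]. apply line_0.
    exfalso. apply n. apply dist_ge0.
  - intros; apply gen_lip.
Qed.

Lemma gen_sts : straight_then_segment (x, y) (gen x y m H tau0).
Proof.
  exists m. split; auto. cbv zeta. split.
  - intros s [_ Hs]. unfold gen. fold (dM x y m) in Hs. destruct Rle_dec; [reflexivity|contradiction].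
  - intros s Hs. fold (dM x y m) in Hs. unfold gen. destruct Rle_dec.
    + assert (s = dM x y m) by lra. subst. rewrite line_end. simpl. lra.
    + unfold proj. simpl. split; auto.
      unfold Rmax, Rmin. repeat destruct Rle_dec; lra.
Qed.

Lemma gen_meet t sg : 0 <= t <= 1 -> 0 <= sg -> tau0 <= sg -> H sg = pkg t sg ->
  gen x y m H tau0 sg = pkg t sg.
Proof.
  intros Ht Hsg Hts Hmeet. unfold gen. destruct Rle_dec.
  - assert (E1 : sg = dM x y m) by lra. assert (E2 : sg = tau0) by lra.
    replace (line x y m sg) with (m, 0) by (rewrite E1; symmetry; apply line_end).
    rewrite <- HH. rewrite <- E2. exact Hmeet.
  - rewrite Rmax_left by lra. rewrite Hmeet. apply proj_seg. unfold onseg, pkg; simpl.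
    unfold Rmin. destruct Rle_dec; lra.
Qed.
End Gen.

Section ULim.
Variable U : (nat -> Prop) -> Prop.
Hypotheses (U_and : forall A B, U A -> U B -> U (fun n => A n /\ B n))
  (U_mono : forall A B : nat -> Prop, (forall n, A n -> B n) -> U A -> U B)
  (U_prop : ~ U (fun _ => False))
  (U_ult : forall A, U A \/ U (fun n => ~ A n))
  (U_cof : forall N, U (fun n => (N <= n)%nat)).

Definition ulim (a : nat -> R) (L : R) := forall e, 0 < e -> U (fun n => Rabs (a n - L) < e).

Lemma U_ex A : U A -> exists n, A n.
Proof.
  intros HA. apply NNPP. intros Hno. apply U_prop. apply (U_mono A); auto.
  intros n An. apply Hno. eauto.
Qed.

Lemma U_all (A : nat -> Prop) : (forall n, A n) -> U A.
Proof. intros HA. apply (U_mono (fun n => (0 <= n)%nat)); auto. Qed.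

Lemma ulim_ex (a : nat -> R) B : (forall n, Rabs (a n) <= B) -> exists L, ulim a L.
Proof.
  intros Hb.
  set (E := fun r => U (fun n => r <= a n)).
  assert (HbE : bound E).
  { exists B. intros r Er. destruct (Rle_dec r B) as [|Hn]; auto. exfalso.
    destruct (U_ex _ Er) as [n Hn']. specialize (Hb n).
    revert Hb; unfold Rabs; destruct Rcase_abs; lra. }
  assert (HnE : exists r, E r).
  { exists (- B). apply U_all. intros n. specialize (Hb n).
    revert Hb; unfold Rabs; destruct Rcase_abs; lra. }
  destruct (completeness E HbE HnE) as [L [Hub Hlub]].
  exists L. intros e He.
  assert (H1 : U (fun n => L - e < a n)).
  { assert (Hex : exists r, E r /\ L - e < r).
    { apply NNPP. intros Hno. assert (L <= L - e); [|lra].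
      apply Hlub. intros r Er. destruct (Rle_dec r (L - e)) as [|Hn]; auto.
      exfalso. apply Hno. exists r. split; auto. lra. }
    destruct Hex as [r [Er Hr]]. apply (U_mono (fun n => r <= a n)); [intros n Hn; lra|exact Er]. }
  assert (H2 : U (fun n => a n < L + e)).
  { destruct (U_ult (fun n => L + e / 2 <= a n)) as [Hc|Hc].
    - assert (L + e / 2 <= L) by (apply Hub; exact Hc). lra.
    - apply (U_mono (fun n => ~ L + e / 2 <= a n)); [intros n Hn; apply Rnot_le_lt in Hn; lra|exact Hc]. }
  apply (U_mono (fun n => L - e < a n /\ a n < L + e)); [|exact (U_and _ _ H1 H2)].
  intros n [Hn1 Hn2]. unfold Rabs; destruct Rcase_abs; lra.
Qed.

Definition ulimit (a : nat -> R) : R := epsilon (inhabits 0) (ulim a).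

Lemma ulimit_spec a B : (forall n, Rabs (a n) <= B) -> ulim a (ulimit a).
Proof. intros Hb. unfold ulimit. apply epsilon_spec. eapply ulim_ex; eauto. Qed.

Lemma ulim_const a c L : (forall n, a n = c) -> ulim a L -> L = c.
Proof.
  intros Ha Hl. assert (L - c = 0); [|lra]. apply small_zero. intros e He.
  destruct (U_ex _ (Hl e He)) as [n Hn]. rewrite Ha in Hn. rewrite Rabs_minus_sym. auto.
Qed.


Lemma Opt_ge1 P t : 1 <= Opt P t.
Proof. unfold Opt. apply Rmax_l. Qed.

Lemma f_lip a b t : Rabs ((a + (1 - Rmin a t)) - (b + (1 - Rmin b t))) <= 2 * Rabs (a - b).
Proof.
  pose proof (Rmin_lip a b t).
  revert H. unfold Rabs; repeat destruct Rcase_abs; lra.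
Qed.

Lemma pick_fun {A : Type} (P : nat -> A -> Prop) (a0 : A) :
  (forall n, exists v, P n v) -> exists f : nat -> A, forall n, P n (f n).
Proof.
  intros Hn. exists (fun n => epsilon (inhabits a0) (P n)).
  intros n. apply epsilon_spec. auto.
Qed.

Lemma limit_alg (x y cs : R) (h : nat -> R -> pt) :
  (forall n, online_alg (x, y) (h n)) ->
  (forall n, CR_le (x, y) (h n) (cs + / INR (S n))) ->
  exists H : R -> pt, lip_from H 0 /\ H 0 = (x, y) /\
     forall t, 0 <= t <= 1 -> exists sg, 0 <= sg /\ H sg = pkg t sg /\
        sg + (1 - Rmin sg t) <= cs * Opt (x, y) t.
Proof.
  intros Hon Hcr.
  assert (Hbd : forall n s, 0 <= s -> Rabs (fst (h n s)) <= Rabs x + s /\ Rabs (snd (h n s)) <= Rabs y + s).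
  { intros n s Hs. destruct (Hon n) as [H0 Hl]. specialize (Hl s 0 Hs (Rle_refl 0)).
    rewrite H0 in Hl. replace (s - 0) with s in Hl by ring. rewrite Rabs_right in Hl by lra.
    pose proof (dist_ge_fst (h n s) (x, y)). pose proof (dist_ge_snd (h n s) (x, y)).
    simpl in *. split.
    - pose proof (Rabs_triang_inv (fst (h n s)) x). lra.
    - pose proof (Rabs_triang_inv (snd (h n s)) y). lra. }
  assert (HL1 : forall s, 0 <= s -> ulim (fun n => fst (h n s)) (ulimit (fun n => fst (h n s)))).
  { intros s Hs. apply (ulimit_spec _ (Rabs x + s)). intros n. apply (Hbd n s Hs). }
  assert (HL2 : forall s, 0 <= s -> ulim (fun n => snd (h n s)) (ulimit (fun n => snd (h n s)))).
  { intros s Hs. apply (ulimit_spec _ (Rabs y + s)). intros n. apply (Hbd n s Hs). }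
  set (H := fun s => (ulimit (fun n => fst (h n s)), ulimit (fun n => snd (h n s)))).
  assert (Happ : forall s, 0 <= s -> forall e, 0 < e -> U (fun n => dist (H s) (h n s) < e)).
  { intros s Hs e He.
    apply (U_mono (fun n => Rabs (fst (h n s) - fst (H s)) < e / 2 /\ Rabs (snd (h n s) - snd (H s)) < e / 2)).
    - intros n [A1 A2]. eapply Rle_lt_trans; [apply dist_le_abs|].
      rewrite Rabs_minus_sym in A1. rewrite Rabs_minus_sym in A2. lra.
    - apply U_and; [apply (HL1 s Hs) | apply (HL2 s Hs)]; lra. }
  exists H. split; [|split].
  - intros s1 s2 Hs1 Hs2. apply le_small. intros e He.
    destruct (U_ex _ (U_and _ _ (Happ s1 Hs1 (e/2) ltac:(lra)) (Happ s2 Hs2 (e/2) ltac:(lra)))) as [n [A1 A2]].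
    pose proof (proj2 (Hon n) s1 s2 Hs1 Hs2).
    pose proof (dist_tri (H s1) (h n s1) (H s2)). pose proof (dist_tri (h n s1) (h n s2) (H s2)).
    rewrite (dist_sym (h n s2)) in *. lra.
  - unfold H. f_equal.
    + apply (ulim_const (fun n => fst (h n 0))). intros n. rewrite (proj1 (Hon n)). auto.
      apply HL1. lra.
    + apply (ulim_const (fun n => snd (h n 0))). intros n. rewrite (proj1 (Hon n)). auto.
      apply HL2. lra.
  - intros t Ht. set (O := Opt (x, y) t). pose proof (Opt_ge1 (x, y) t) as HO. fold O in HO.
    destruct (pick_fun (fun n tau => first_meet (h n) t tau /\ tau + (1 - Rmin tau t) <= (cs + / INR (S n)) * O) 0) as [tau Htau].
    { intros n. destruct (Hcr n t Ht) as [d [[tau [Hfm ->]] Hd]]. exists tau. auto. }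
    assert (Hinv : forall n, 0 < / INR (S n) <= 1).
    { intros n. pose proof (lt_0_INR (S n) ltac:(lia)). split. apply Rinv_0_lt_compat; lra.
      rewrite <- Rinv_1. apply Rinv_le_contravar; [lra|]. rewrite S_INR. pose proof (pos_INR n). lra. }
    assert (Htb : forall n, Rabs (tau n) <= (Rabs cs + 1) * O).
    { intros n. destruct (Htau n) as [[Hp _] Hle]. specialize (Hinv n).
      assert (Rmin (tau n) t <= 1) by (pose proof (Rmin_r (tau n) t); lra).
      rewrite Rabs_right by lra.
      assert ((cs + / INR (S n)) * O <= (Rabs cs + 1) * O).
      { apply Rmult_le_compat_r; [lra|]. pose proof (Rle_abs cs). lra. }
      lra. }
    pose proof (ulimit_spec tau _ Htb) as Hs. set (sg := ulimit tau) in *.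
    assert (Hsg0 : 0 <= sg).
    { destruct (Rle_dec 0 sg) as [|Hn]; auto. exfalso.
      destruct (U_ex _ (Hs (- sg) ltac:(lra))) as [n Hn'].
      destruct (Htau n) as [[Hp _] _]. revert Hn'. unfold Rabs; destruct Rcase_abs; lra. }
    assert (Hclose : forall e, 0 < e -> exists n, dist (H sg) (h n sg) < e /\ Rabs (tau n - sg) < e /\ (forall N, (N <= n)%nat \/ True)).
    { intros e He. destruct (U_ex _ (U_and _ _ (Happ sg Hsg0 e He) (Hs e He))) as [n [A1 A2]].
      exists n. auto. }
    exists sg. split; [auto|split].
    + assert (Hm : forall n, h n (tau n) = pkg t (tau n)) by (intros n; apply (Htau n)).
      assert (Hd : forall n, dist (h n sg) (h n (tau n)) <= Rabs (sg - tau n)).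
      { intros n. apply (proj2 (Hon n)); auto. apply (Htau n). }
      assert (E1 : fst (H sg) = Rmin sg t).
      { assert (fst (H sg) - Rmin sg t = 0); [|lra]. apply small_zero. intros e He.
        destruct (Hclose (e/3) ltac:(lra)) as [n [A1 [A2 _]]].
        pose proof (dist_ge_fst (H sg) (h n sg)). pose proof (dist_ge_fst (h n sg) (h n (tau n))) as B1.
        pose proof (Hd n) as B2. rewrite Hm in B1, B2. unfold pkg in B1, B2. cbn [fst] in B1.
        pose proof (Rmin_lip (tau n) sg t). rewrite (Rabs_minus_sym (tau n) sg) in *.
        assert (Rabs (fst (H sg) - Rmin sg t) <= Rabs (fst (H sg) - fst (h n sg)) + Rabs (fst (h n sg) - Rmin (tau n) t) + Rabs (Rmin (tau n) t - Rmin sg t)).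
        { unfold Rabs; repeat destruct Rcase_abs; lra. }
        lra. }
      assert (E2 : snd (H sg) = 0).
      { assert (snd (H sg) - 0 = 0); [|lra]. apply small_zero. intros e He.
        destruct (Hclose (e/2) ltac:(lra)) as [n [A1 [A2 _]]].
        pose proof (dist_ge_snd (H sg) (h n sg)). pose proof (dist_ge_snd (h n sg) (h n (tau n))) as B1.
        pose proof (Hd n) as B2. rewrite Hm in B1, B2. unfold pkg in B1, B2. cbn [snd] in B1. rewrite (Rabs_minus_sym (tau n) sg) in A2.
        assert (Rabs (snd (H sg) - 0) <= Rabs (snd (H sg) - snd (h n sg)) + Rabs (snd (h n sg) - 0)).
        { unfold Rabs; repeat destruct Rcase_abs; lra. }
        lra. }
      unfold pkg. apply injective_projections; [exact E1|exact E2].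
    + apply le_small. intros e He.
      assert (HeO : 0 < e / (3 * O)) by (apply Rdiv_lt_0_compat; lra).
      destruct (archimed_cor1 _ HeO) as [N [HN HN0]].
      destruct (U_ex _ (U_and _ _ (U_cof N) (Hs (e/3) ltac:(lra)))) as [n [Hn A2]].
      destruct (Htau n) as [_ Hle].
      pose proof (f_lip sg (tau n) t). rewrite Rabs_minus_sym in A2.
      assert (/ INR (S n) <= / INR N).
      { apply Rinv_le_contravar. apply lt_0_INR; lia. apply le_INR; lia. }
      assert (/ INR N * O < e / 3).
      { replace (e / 3) with (e / (3 * O) * O) by (field; lra). apply Rmult_lt_compat_r; lra. }
      assert ((cs + / INR (S n)) * O <= cs * O + / INR N * O).
      { rewrite Rmult_plus_distr_r. apply Rplus_le_compat_l. apply Rmult_le_compat_r; lra. }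
      revert H0. unfold Rabs at 1; destruct Rcase_abs; lra.
Qed.

End ULim.

Lemma CR_mono P h c c' : c <= c' -> CR_le P h c -> CR_le P h c'.
Proof.
  intros Hc Hcr t Ht. destruct (Hcr t Ht) as [d [Hd Hle]]. exists d. split; auto.
  pose proof (Opt_ge1 P t). apply (Rle_trans _ _ _ Hle). apply Rmult_le_compat_r; lra.
Qed.

Lemma f_mono a b t : a <= b -> a + (1 - Rmin a t) <= b + (1 - Rmin b t).
Proof. intros. unfold Rmin. repeat destruct Rle_dec; lra. Qed.

Lemma CR_pos P h c : CR_le P h c -> 0 < c.
Proof.
  intros Hcr. destruct (Hcr 0 ltac:(lra)) as [d [[tau [[Ht _] ->]] Hle]].
  pose proof (Opt_ge1 P 0).
  assert (Rmin tau 0 = 0) by (unfold Rmin; destruct Rle_dec; lra).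
  destruct (Rlt_dec 0 c) as [|Hn]; auto. exfalso.
  assert (c * Opt P 0 <= 0) by nra. lra.
Qed.

Lemma first_meet_of (G : R -> pt) t sg : lip_from G 0 -> 0 <= sg -> G sg = pkg t sg ->
  exists tau, tau <= sg /\ first_meet G t tau.
Proof.
  intros HG Hsg Hm.
  destruct (first_time (fun s => G s = pkg t s) sg Hsg Hm (meet_closed G t HG)) as [tau [[H1 H2] [H3 H4]]].
  exists tau. split; auto. split; auto.
Qed.

Theorem lemma1 (x y : R) (hy : 0 <= y) :
  exists g : R -> pt,
    online_alg (x, y) g /\ straight_then_segment (x, y) g /\
    forall (h : R -> pt) (c : R),
      online_alg (x, y) h -> CR_le (x, y) h c -> CR_le (x, y) g c.
Proof.
  set (Cset := fun c => exists h, online_alg (x, y) h /\ CR_le (x, y) h c).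
  destruct (classic (exists c, Cset c)) as [[c0 Hc0]|Hno].
  2:{ assert (Hl : lip_from (fun _ : R => ((0, 0) : pt)) (dM x y 0)).
      { intros s1 s2 _ _. rewrite dist_axis. replace (0 - 0) with 0 by ring. rewrite Rabs_R0. apply Rabs_pos. }
      assert (Hm : 0 <= 0 <= 1) by lra.
      exists (gen x y 0 (fun _ => (0, 0)) (dM x y 0)). split; [|split].
      - apply gen_online; auto; lra.
      - apply gen_sts; auto; lra.
      - intros h c Hh Hc. exfalso. apply Hno. exists c, h. auto. }
  set (E := fun r => exists c, Cset c /\ r = - c).
  assert (HbE : bound E).
  { exists 0. intros r [c [[h [_ Hc]] ->]]. pose proof (CR_pos _ _ _ Hc). lra. }
  assert (HnE : exists r, E r) by (exists (- c0); exists c0; auto).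
  destruct (completeness E HbE HnE) as [mm [Hub Hlub]].
  set (cs := - mm).
  assert (Hlow : forall c, Cset c -> cs <= c).
  { intros c Hc. assert (- c <= mm) by (apply Hub; exists c; auto). unfold cs. lra. }
  assert (Happ : forall n, exists h, online_alg (x, y) h /\ CR_le (x, y) h (cs + / INR (S n))).
  { intros n. assert (Hd : 0 < / INR (S n)) by (apply Rinv_0_lt_compat, lt_0_INR; lia).
    apply NNPP. intros Hno.
    assert (mm <= - (cs + / INR (S n))); [|unfold cs in *; lra].
    apply Hlub. intros r [c [Hc ->]].
    destruct (Rle_dec (cs + / INR (S n)) c); [lra|]. exfalso.
    destruct Hc as [h [Hh Hc]]. apply Hno. exists h. split; auto.
    apply (CR_mono _ _ c); auto. lra. }
  destruct (pick_fun (fun n h => online_alg (x, y) h /\ CR_le (x, y) h (cs + / INR (S n))) (fun _ => (0, 0)) Happ) as [hs Hhs].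
  destruct UF.ultra_exists as [U [Uand [Umono [Uprop [Uult Ucof]]]]].
  destruct (limit_alg U Uand Umono Uprop Uult Ucof x y cs hs (fun n => proj1 (Hhs n)) (fun n => proj2 (Hhs n)))
    as [H [Hlip [H0 Hmeet]]].
  destruct (Hmeet 0 ltac:(lra)) as [sg0 [Hsg0 [Hm0 _]]].
  assert (Hseg0 : onseg (H sg0)).
  { rewrite Hm0. unfold onseg, pkg. simpl. unfold Rmin. destruct Rle_dec; lra. }
  destruct (first_time (fun s => onseg (H s)) sg0 Hsg0 Hseg0 (seg_closed H Hlip)) as [tau0 [[Ht0 _] [Hseg Hfirst]]].
  set (m := fst (H tau0)).
  assert (HHt : H tau0 = (m, 0)).
  { unfold m. destruct Hseg as [_ Hs]. destruct (H tau0) as [a b]. simpl in *. subst. auto. }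
  assert (Hm : 0 <= m <= 1) by (apply Hseg).
  assert (Hd : dM x y m <= tau0).
  { unfold dM. rewrite <- H0, <- HHt. pose proof (Hlip 0 tau0 ltac:(lra) Ht0).
    rewrite Rabs_minus_sym, Rabs_right in H1 by lra. lra. }
  assert (Hl0 : lip_from H tau0) by (intros s1 s2 ? ?; apply Hlip; lra).
  exists (gen x y m H tau0). split; [|split].
  - apply gen_online; auto.
  - apply gen_sts; auto.
  - intros h c Hh Hc. assert (Hcs : cs <= c) by (apply Hlow; exists h; auto).
    intros t Ht. destruct (Hmeet t Ht) as [sg [Hsg [Hmt Hle]]].
    assert (Hts : tau0 <= sg).
    { destruct (Rle_dec tau0 sg) as [|Hn]; auto. exfalso. apply (Hfirst sg). lra.
      rewrite Hmt. unfold onseg, pkg. simpl. unfold Rmin. destruct Rle_dec; lra. }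
    assert (Hgm : gen x y m H tau0 sg = pkg t sg) by (apply gen_meet; auto).
    assert (Hgl : lip_from (gen x y m H tau0) 0) by (intros s1 s2 _ _; apply gen_lip; auto).
    destruct (first_meet_of _ t sg Hgl Hsg Hgm) as [tau [Htau Hfm]].
    exists (tau + (1 - Rmin tau t)). split.
    + exists tau. split; auto.
    + pose proof (f_mono tau sg t Htau). pose proof (Opt_ge1 (x, y) t).
      assert (cs * Opt (x, y) t <= c * Opt (x, y) t) by (apply Rmult_le_compat_r; lra).
      lra.
Qed.
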